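(* There is no function $g:\mathbb{N}\to\mathbb{N}$ such that $\operatorname{bcrk}(D)\le g(\operatorname{dbw}(D))$ for every digraph $D$.
   Context: A layout of a symmetric function $f:2^U\to\mathbb{Z}$ on a finite set $U$ is a pair $(T,\beta)$, $T$ a tree of maximum degree at most three, $\beta$ a bijection from leaves of $T$ onto $U$; the order of a tree edge is $f(\beta(Y))$ for $Y$ the leaves on one side; width is the maximum order (0 if none); the layout-$f$-width of $U$ is the minimum width. Directed branch-width: $\operatorname{dbw}(D)$ is the layout-$f_D$-width of $E(D)$ where $f_D(X)=|S^V_X\cup S^V_{E(D)\setminus X}|$ and $S^V_X=\{y: \exists x,z,\ \vec{xy}\in E(D)\setminus X,\ \vec{yz}\in X\}$. Bi-cut-rank-width: with $M$ the $\mathrm{GF}(2)$ adjacency matrix of $D$ ($M_{uv}=1$ iff $\vec{uv}\in E(D)$), $g_D(X)=\operatorname{rk}(M[V(D)\setminus X,X])+\operatorname{rk}(M[X,V(D)\setminus X])$, and $\operatorname{bcrk}(D)$ is the layout-$g_D$-width of $V(D)$. *)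

(* Defs.v *)
From mathcomp Require Import all_boot all_order all_algebra.
Set Implicit Arguments. Unset Strict Implicit. Unset Printing Implicit Defensive.

Definition rm_edge (T : finType) (t : rel T) (x y : T) : rel T :=
  [rel a b | t a b && ~~ (((a == x) && (b == y)) || ((a == y) && (b == x)))].

Definition is_tree (T : finType) (t : rel T) : Prop :=
  [/\ symmetric t, irreflexive t,
      (forall x y, connect t x y) &
      (forall x y, t x y -> ~~ connect (rm_edge t x y) x y)].

Definition subcubic (T : finType) (t : rel T) : Prop :=
  forall x, #|[set y | t x y]| <= 3.

Definition leaves (T : finType) (t : rel T) : {set T} :=
  [set x | #|[set y | t x y]| <= 1].

Definition side (T : finType) (t : rel T) (x y : T) : {set T} :=
  [set l in leaves t | connect (rm_edge t x y) x l].

Definition is_layout (U T : finType) (t : rel T) (beta : T -> U) : Prop :=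
  [/\ is_tree t, subcubic t,
      {in leaves t &, injective beta} &
      (forall u, exists2 l, l \in leaves t & beta l = u)].

Definition width_le (U T : finType) (f : {set U} -> nat) (t : rel T)
  (beta : T -> U) (k : nat) : Prop :=
  forall x y, t x y -> f (beta @: side t x y) <= k.

Definition layout_width_le (U : finType) (f : {set U} -> nat) (k : nat) : Prop :=
  exists (T : finType) (t : rel T) (beta : T -> U),
    is_layout t beta /\ width_le f t beta k.

Definition layout_width (U : finType) (f : {set U} -> nat) (k : nat) : Prop :=
  layout_width_le f k /\ forall j, layout_width_le f j -> k <= j.

Definition arc (V : finType) (E : rel V) := {p : V * V | E p.1 p.2}.

Definition SV (V : finType) (E : rel V) (X : {set arc E}) : {set V} :=
  [set y | [exists a : arc E, exists b : arc E,
     [&& a \notin X, b \in X, (val a).2 == y & (val b).1 == y]]].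

Definition fD (V : finType) (E : rel V) (X : {set arc E}) : nat :=
  #|SV X :|: SV (~: X)|.

Definition dbw (V : finType) (E : rel V) (k : nat) : Prop :=
  layout_width (@fD V E) k.

Definition adj_sub (V : finType) (E : rel V) (R C : {set V}) :
  'M['F_2]_(#|R|, #|C|) :=
  \matrix_(i < #|R|, j < #|C|)
     (if E (enum_val i) (enum_val j) then 1 else 0)%R.

Definition gD (V : finType) (E : rel V) (X : {set V}) : nat :=
  \rank (adj_sub E (~: X) X) + \rank (adj_sub E X (~: X)).

Definition bcrk (V : finType) (E : rel V) (k : nat) : Prop :=
  layout_width (@gD V E) k.

(* Main.v *)
Require Import Defs.
From mathcomp Require Import all_boot all_order all_algebra zify.
From Stdlib Require Import Classical.
Set Implicit Arguments. Unset Strict Implicit. Unset Printing Implicit Defensive.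


Lemma card_le_sum (I T : finType) (N : {set I}) (F : I -> {set T}) (S : {set T}) :
 (forall l, l \in S -> exists2 z, z \in N & l \in F z) -> #|S| <= \sum_(z in N) #|F z|.
Proof.
move=> H; rewrite -sum1_card.
apply: (@leq_trans (\sum_(l in S) \sum_(z in N) (l \in F z))).
  apply: leq_sum => l lS; have [z zN lF] := H l lS.
  by rewrite (bigD1 z) //= lF.
rewrite exchange_big; apply: leq_sum => z _.
rewrite -big_mkcondr /=.
rewrite (eq_bigl (fun l => l \in S :&: F z)); last by move=> l; rewrite !inE.
rewrite sum1_card; apply: subset_leq_card; exact: subsetIr.
Qed.

Definition comp (T : finType) (t : rel T) (y x : T) : {set T} :=
  [set v | connect (rm_edge t y x) y v].

Lemma rm_sub (T : finType) (t : rel T) x y a b : rm_edge t x y a b -> t a b.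
Proof. by rewrite /rm_edge /= => /andP[]. Qed.

Lemma step_out (T : finType) (t R : rel T) y w :
  (forall a b, R a b -> t a b) -> connect R y w -> w != y ->
  exists z, R y z /\ connect (rm_edge t z y) z w.
Proof.
move=> Rt /connectP[p pP ->]; case: (shortenP pP) => [[|z q] /= pR U _] //.
  by rewrite eqxx.
move=> _; case/andP: pR => Ryz pq; exists z; split => //.
apply/connectP; exists q => //.
case/andP: U; rewrite inE negb_or => /andP[yz yq] _.
apply: (@sub_in_path _ (predC1 y) R); last exact: pq.
  move=> a b /= ay b_y Rab; rewrite /rm_edge /= (Rt _ _ Rab) /=.
  by rewrite (negbTE ay) (negbTE b_y) !andbF.
by rewrite /= (eq_sym z) yz /=; apply/allP => v vq /=; apply: contraNneq yq => <-.
Qed.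

Lemma comp_sub (T : finType) (t : rel T) y x z :
  is_tree t -> t y x -> t y z -> z != x -> comp t z y \subset comp t y x.
Proof.
case=> sym irr _ br yx yz zx; apply/subsetP => w; rewrite !inE.
move=> /connectP[p pP ->]; case: (shortenP pP) => q pq U _.
have zy : z != y by apply: contraTneq yz => ->; rewrite irr.
have yq : y \notin z :: q.
  rewrite inE negb_or eq_sym zy /=; apply/negP => yq.
  have := path_connect pq; move/(_ y); rewrite inE yq orbT => /(_ isT).
  by apply/negP; apply: br; rewrite sym.
apply/connectP; exists (z :: q) => //=.
have yx' : y != x by apply: contraTneq yx => ->; rewrite irr.
rewrite /rm_edge /= yz eqxx (negbTE zx) (negbTE yx') /=.
apply: (@sub_in_path _ (predC1 y) (rm_edge t z y)); last exact: pq.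
  move=> a b /= ay b_y Rab; rewrite /rm_edge /= (rm_sub Rab) /=.
  by rewrite (negbTE ay) (negbTE b_y) !andbF.
by apply/allP => v vq /=; apply: contraNneq yq => <-.
Qed.

Lemma comp_lt (T : finType) (t : rel T) y x z :
  is_tree t -> t y x -> t y z -> z != x -> #|comp t z y| < #|comp t y x|.
Proof.
move=> tr yx yz zx; apply: proper_card; rewrite properE comp_sub //=.
apply/subsetPn; exists y; first by rewrite inE connect0.
case: tr => sym _ _ br; rewrite inE; apply: br; by rewrite sym.
Qed.

Lemma nbr_two (T : finType) (t : rel T) y x z :
  t y x -> t y z -> z != x -> 2 <= #|[set v | t y v]|.
Proof.
move=> yx yz zx; apply: leq_trans (subset_leq_card (_ : [set x; z] \subset _)).
  by rewrite cards2 eq_sym zx.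
by apply/subsetP => v; rewrite !inE => /orP[] /eqP ->.
Qed.

Lemma leaf_side (T : finType) (t : rel T) (W : {set T}) y x :
  y \in leaves t -> t y x -> #|side t y x :&: W| <= 1.
Proof.
move=> yl yx; apply: leq_trans (subset_leq_card (_ : _ \subset [set y])) _.
  apply/subsetP => w; rewrite !inE => /andP[/andP[_ c] _].
  apply/negPn/negP => wy.
  have [z [Rz _]] := step_out (@rm_sub _ t y x) c wy.
  move: Rz; rewrite /rm_edge /= eqxx /= => /andP[yz]; rewrite negb_or => /andP[zx _].
  by move: yl; rewrite inE => yl1; have := leq_trans (nbr_two yx yz zx) yl1.
by rewrite cards1.
Qed.

Lemma card_le_sum_bound (I T : finType) (N : {set I}) (F : I -> {set T}) (S : {set T}) c :
 (forall l, l \in S -> exists2 z, z \in N & l \in F z) ->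
 (forall z, z \in N -> #|F z| <= c) -> #|S| <= #|N| * c.
Proof.
move=> H1 H2; apply: leq_trans (card_le_sum H1) _.
rewrite -sum_nat_const; exact: leq_sum.
Qed.

Lemma nonleaf_side (T : finType) (t : rel T) (W : {set T}) y x c :
  is_tree t -> subcubic t -> W \subset leaves t -> y \notin leaves t -> t y x ->
  (forall z, t y z -> z != x -> #|side t z y :&: W| <= c) ->
  #|side t y x :&: W| <= 2 * c.
Proof.
move=> tr sc WL yL yx H.
have HN : #|[set z | t y z & z != x]| <= 2.
  have := sc y; rewrite (cardsD1 x) inE yx add1n ltnS.
  move=> h; apply: leq_trans h; apply: subset_leq_card; apply/subsetP => v.
  by rewrite !inE => /andP[-> ->].
apply: leq_trans (leq_mul HN (leqnn c)).
apply: (card_le_sum_bound (F := fun z => side t z y :&: W)).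
  move=> l; rewrite in_setI /side in_set => /andP[/andP[lL c1] lW].
  have ly : l != y by apply: contraNneq yL => <-.
  have [z [Rz c2]] := step_out (@rm_sub _ t y x) c1 ly.
  move: Rz; rewrite /rm_edge /= eqxx /= => /andP[yz]; rewrite negb_or => /andP[zx _].
  by exists z; [rewrite inE yz zx | rewrite in_setI /side in_set lL c2 lW].
by move=> z; rewrite inE => /andP[yz zx]; apply: H.
Qed.

Lemma root_side (T : finType) (t : rel T) (W : {set T}) r c :
  is_tree t -> subcubic t -> W \subset leaves t ->
  (forall z, t r z -> #|side t z r :&: W| <= c) ->
  #|W| <= 1 + 3 * c.
Proof.
move=> tr sc WL H.
rewrite (cardsD1 r W); apply: leq_add; first by case: (r \in W).
apply: leq_trans (leq_mul (sc r) (leqnn c)).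
apply: (card_le_sum_bound (F := fun z => side t z r :&: W)).
  move=> l; rewrite in_setD1 => /andP[lr lW].
  have lL : l \in leaves t by apply: (subsetP WL).
  case: tr => _ _ con _.
  have [z [Rz c2]] := step_out (t := t) (R := t) (fun a b h => h) (con r l) lr.
  by exists z; [rewrite inE Rz | rewrite in_setI /side in_set lL c2 lW].
by move=> z; rewrite inE; apply: H.
Qed.

Lemma descent (T : finType) (t : rel T) (W : {set T}) m :
  is_tree t -> subcubic t -> W \subset leaves t -> 0 < m -> 3 * m <= #|W| ->
  forall n y x, #|comp t y x| <= n -> t y x -> m <= #|side t y x :&: W| ->
  exists y' x', [/\ t y' x', m <= #|side t y' x' :&: W| & #|side t y' x' :&: W| + m <= #|W|].
Proof.
move=> tr sc WL m0 mW; elim=> [|n IH] y x.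
  rewrite leqn0 cards_eq0 => /eqP E; suff: y \in comp t y x by rewrite E inE.
  by rewrite inE connect0.
move=> cn yx my.
case: (leqP (#|side t y x :&: W| + m) #|W|) => hi; first by exists y, x.
case: (boolP (y \in leaves t)) => yL.
  have := leaf_side W yL yx; lia.
have [z [yz zx mz]] : exists z, [/\ t y z, z != x & m <= #|side t z y :&: W|].
  apply/not_all_not_ex => H.
  have := nonleaf_side (c := m.-1) tr sc WL yL yx.
  have H' : forall z, t y z -> z != x -> #|side t z y :&: W| <= m.-1.
    move=> z yz zx; rewrite leqNgt; apply/negP => lt; apply: (H z); split => //.
    by move: lt; case: (m) m0 => // k _; rewrite ltnS.
  move/(_ H'); lia.
apply: (IH z y) => //; last by case: tr => sym _ _ _; rewrite sym.
by rewrite -ltnS; apply: leq_trans cn; apply: comp_lt.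
Qed.

Lemma separator (T : finType) (t : rel T) (W : {set T}) m :
  is_tree t -> subcubic t -> W \subset leaves t -> 0 < m -> 3 * m <= #|W| ->
  exists y x, [/\ t y x, m <= #|side t y x :&: W| & #|side t y x :&: W| + m <= #|W|].
Proof.
move=> tr sc WL m0 mW.
have [r rW] : {r | r \in W}.
  case: (pickP (mem W)) => [r rW|e]; first by exists r.
  by move: mW; rewrite (eq_card0 e); lia.
have [z [rz mz]] : exists z, t r z /\ m <= #|side t z r :&: W|.
  apply/not_all_not_ex => H.
  have H' : forall z, t r z -> #|side t z r :&: W| <= m.-1.
    move=> z rz; rewrite leqNgt; apply/negP => lt; apply: (H z); split => //.
    by move: lt; case: (m) m0 => // k _; rewrite ltnS.
  have := root_side tr sc WL H'; lia.
apply: (descent tr sc WL m0 mW (leqnn _)) mz.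
by case: tr => sym _ _ _; rewrite sym.
Qed.

Lemma connect_inv (T : finType) (R : rel T) (P : pred T) x y :
  (forall a b, R a b -> P a -> P b) -> connect R x y -> P x -> P y.
Proof.
move=> cl /connectP[p pP ->]; elim: p x pP => //= a p IH x /andP[Rxa pa] Px.
exact: IH pa (cl _ _ Rxa Px).
Qed.

Definition ctT (k : nat) := ('I_k.+1 + 'I_k.+1)%type.
Definition idx k (v : ctT k) : 'I_k.+1 := match v with inl i => i | inr i => i end.
Definition ct (k : nat) : rel (ctT k) := fun a b =>
  match a, b with
  | inl i, inl j => (i.+1 == j :> nat) || (j.+1 == i :> nat)
  | inl i, inr j => i == j
  | inr i, inl j => i == j
  | inr _, inr _ => false
  end.

Lemma ct_sym k : symmetric (@ct k).
Proof. by move=> [a|a] [b|b] //=; rewrite ?(eq_sym a) // orbC. Qed.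

Lemma ct_irr k : irreflexive (@ct k).
Proof. by move=> [a|a] //=; rewrite !gtn_eqF. Qed.

Lemma rm_edge_sym (T : finType) (t : rel T) x y : rm_edge t x y =2 rm_edge t y x.
Proof. by move=> a b; rewrite /rm_edge /= orbC. Qed.

Lemma rm_edge_symm (T : finType) (t : rel T) x y : symmetric t -> symmetric (rm_edge t x y).
Proof.
move=> s a b; rewrite /rm_edge /= s.
by case: (a == x); case: (a == y); case: (b == x); case: (b == y); rewrite ?andbF ?andbT.
Qed.

Lemma ct_con k (x y : ctT k) : connect (@ct k) x y.
Proof.
have h0 : forall i : 'I_k.+1, connect (@ct k) (inl ord0) (inl i).
  case=> i; elim: i => [|i IH] Hi; first by rewrite (_ : Ordinal Hi = ord0) //; apply: val_inj.
  apply: connect_trans (IH (ltnW Hi)) _; apply: connect1 => /=; by rewrite eqxx.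
have h1 : forall v : ctT k, connect (@ct k) (inl ord0) v.
  case=> i //; apply: connect_trans (h0 i) _; apply: connect1 => /=; by rewrite eqxx.
apply: connect_trans (h1 y); rewrite (sym_connect_sym (@ct_sym k)); exact: h1.
Qed.

Lemma bridge_sym (T : finType) (t : rel T) x y : symmetric t ->
  ~~ connect (rm_edge t y x) y x -> ~~ connect (rm_edge t x y) x y.
Proof.
move=> s; rewrite (eq_connect (rm_edge_sym t x y)).
by rewrite (sym_connect_sym (rm_edge_symm y x s)).
Qed.

Lemma ct_bridge1 k (i j : 'I_k.+1) : i.+1 = j ->
  ~~ connect (rm_edge (@ct k) (inl i) (inl j)) (inl i) (inl j).
Proof.
move=> ij; apply/negP => /connect_inv H.
suff: i.+1 <= i by rewrite ltnn.
rewrite ij; apply: (H (fun v => idx v <= i)) => //.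
move=> [a|a] [b|b] //=; rewrite /rm_edge /=; last first.
- by move=> /andP[/eqP <-].
- by move=> /andP[/eqP <-].
move=> /andP[/orP[/eqP ab|/eqP ba]] ; last by lia.
have e1 : (inl a == inl i :> ctT k) = (a == i) by [].
have e2 : (inl b == inl j :> ctT k) = (b == j) by [].
rewrite e1 e2 => nd ai; move: nd; case: (eqVneq a i) => [ai'|ani].
  have bj : b = j by apply: val_inj; rewrite /= -ab -ij ai'.
  by rewrite bj eqxx.
move=> _; move: ani; rewrite -(inj_eq val_inj) /=; lia.
Qed.

Lemma ct_bridge2 k (i : 'I_k.+1) :
  ~~ connect (rm_edge (@ct k) (inl i) (inr i)) (inl i) (inr i).
Proof.
apply/negP => /connect_inv H.
suff: inr i != inr i :> ctT k by rewrite eqxx.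
apply: (H (fun v => v != inr i)) => // a [b|b] //.
case: a => a //=; rewrite /rm_edge /= => /andP[/eqP -> nd] _.
apply: contra nd => /eqP [->]; by rewrite !eqxx.
Qed.

Lemma ct_bridge k (x y : ctT k) : ct x y -> ~~ connect (rm_edge (@ct k) x y) x y.
Proof.
case: x => a; case: y => b //=.
- case/orP => /eqP h; first exact: ct_bridge1.
  by apply: bridge_sym; [exact: ct_sym | exact: ct_bridge1].
- by move/eqP <-; exact: ct_bridge2.
- by move/eqP <-; apply: bridge_sym; [exact: ct_sym | exact: ct_bridge2].
Qed.

Lemma ct_tree k : is_tree (@ct k).
Proof. split; [exact: ct_sym | exact: ct_irr | exact: ct_con | exact: ct_bridge]. Qed.

Lemma card3 (T : finType) (a b c : T) : #|[set a; b; c]| <= 3.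
Proof.
apply: leq_trans (leq_card_setU _ _) _; rewrite cards1 addn1 ltnS.
by apply: leq_trans (leq_card_setU _ _) _; rewrite !cards1.
Qed.

Lemma ct_sub k : subcubic (@ct k).
Proof.
move=> [i|i].
  apply: leq_trans (card3 (inr i) (inl (inord i.+1)) (inl (inord i.-1))).
  apply: subset_leq_card; apply/subsetP => -[j|j]; rewrite !inE /=.
    case/orP => /eqP h.
      apply/orP; left; apply/eqP; congr inl; apply: val_inj.
      by rewrite /= inordK h.
    apply/orP; right; apply/eqP; congr inl; apply: val_inj.
    by rewrite /= inordK -h //=; exact: ltn_ord.
  by move=> /eqP ->; rewrite eqxx.
apply: leq_trans (subset_leq_card (_ : _ \subset [set inl i])) _; last by rewrite cards1.
by apply/subsetP => -[j|j]; rewrite !inE //= => /eqP ->.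
Qed.

Lemma ct_leaves k (v : ctT k) : 0 < k -> (v \in leaves (@ct k)) = (if v is inr _ then true else false).
Proof.
move=> k0; case: v => i; rewrite inE.
  apply/negbTE; rewrite -ltnNge.
  pose j : 'I_k.+1 := if i < k then inord i.+1 else inord i.-1.
  apply: (@nbr_two _ _ (inl i) (inr i) (inl j)) => //=.
  rewrite /j; case: ifP => ik; rewrite inordK; try (have := ltn_ord i; lia).
apply: leq_trans (subset_leq_card (_ : _ \subset [set inl i])) _; last by rewrite cards1.
by apply/subsetP => -[j|j]; rewrite !inE //= => /eqP ->.
Qed.

Lemma layout_exists (U : finType) : 2 <= #|U| ->
  exists (T : finType) (t : rel T) (beta : T -> U), is_layout t beta.
Proof.
move=> U2.
have [k [Hk k0]] : exists k, #|U| = k.+1 /\ 0 < k.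
  by exists #|U|.-1; split; lia.
exists (ctT k), (@ct k), (fun v => enum_val (cast_ord (esym Hk) (idx v))).
split; [exact: ct_tree | exact: ct_sub | | ].
  move=> [i|i] [j|j]; rewrite !ct_leaves //= => _ _ /enum_val_inj /cast_ord_inj -> //.
move=> u; exists (inr (cast_ord Hk (enum_rank u))); first by rewrite ct_leaves.
by rewrite /= cast_ordK enum_rankK.
Qed.
Import GRing.Theory.

Lemma rank_rowsub (F : fieldType) m m' n (f : 'I_m' -> 'I_m) (A : 'M[F]_(m, n)) :
  \rank (rowsub f A) <= \rank A.
Proof. by rewrite rowsubE mxrankM_maxr. Qed.

Lemma rank_ge_id (F : fieldType) (I : finType) p q (A : 'M[F]_(p, q)) (S : {set I})
  (f : I -> 'I_p) (h : I -> 'I_q) :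
  (forall t u, t \in S -> u \in S -> A (f t) (h u) = (t == u)%:R%R) -> #|S| <= \rank A.
Proof.
move=> H.
pose B := rowsub (fun r : 'I_#|S| => f (enum_val r)) A.
pose C := rowsub (fun r : 'I_#|S| => h (enum_val r)) B^T.
have EC : C = 1%:M%R.
  apply/matrixP => r c; rewrite !mxE H ?enum_valP //.
  by rewrite (inj_eq enum_val_inj) eq_sym.
have : \rank C = #|S| by rewrite EC mxrank1.
move=> <-; apply: leq_trans (rank_rowsub _ _) _.
by rewrite mxrank_tr rank_rowsub.
Qed.

Lemma fD_zero (V : finType) (E : rel V) (X : {set Defs.arc E}) :
  (forall u v w, E u v -> E v w -> False) -> fD X = 0.
Proof.
move=> H; apply/eqP; rewrite cards_eq0; apply/eqP/setP => y; rewrite !inE.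
apply/negbTE; apply/negP => /orP[] /existsP[[[a1 a2] Ea] /existsP[[[b1 b2] Eb]]] /=;
  case/and4P => _ _ /eqP ha /eqP hb; subst; exact: (H _ _ _ Ea Eb).
Qed.

Lemma min_exists (P : nat -> Prop) n : P n -> exists k, P k /\ forall j, P j -> k <= j.
Proof.
elim: n {-2}n (leqnn n) => [|n IH] n' Hn Pn.
  by exists n'; split => // j _; move: Hn; rewrite leqn0 => /eqP ->.
case: (classic (exists j, j < n' /\ P j)) => [[j [jn Pj]]|nj].
  by apply: (IH j) => //; lia.
exists n'; split => // j Pj; rewrite leqNgt; apply/negP => jn; apply: nj; by exists j.
Qed.

Lemma width_exists (U : finType) (f : {set U} -> nat) : 2 <= #|U| ->
  exists k, layout_width f k.
Proof.
move=> U2; have [T [t [beta L]]] := layout_exists U2.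
have P0 : layout_width_le f (\max_(X : {set U}) f X).
  exists T, t, beta; split => // x y _; exact: (leq_bigmax (F := f)).
have [k [Pk Hk]] := min_exists P0.
by exists k.
Qed.

Lemma dbw_zero (V : finType) (E : rel V) :
  (forall u v w, E u v -> E v w -> False) -> 2 <= #|{: Defs.arc E}| -> dbw E 0.
Proof.
move=> H A2; have [T [t [beta L]]] := layout_exists A2.
split => //; exists T, t, beta; split => // x y _; by rewrite fD_zero.
Qed.

Definition GV k := ('I_k + ('I_k * 'I_k))%type.
Definition GE k : rel (GV k) := fun a b =>
  match a, b with
  | inl i, inr pq => (i == pq.1) || (i == pq.2)
  | _, _ => false
  end.
Definition is_inl k (v : GV k) := if v is inl _ then true else false.

Lemma GE_irr k : irreflexive (@GE k).
Proof. by case. Qed.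

Lemma GE_no2 k (u v w : GV k) : GE u v -> GE v w -> False.
Proof. by case: u => // ?; case: v => // -[]. Qed.

Lemma card_inl k : #|[set v : GV k | is_inl v]| = k.
Proof.
have -> : [set v : GV k | is_inl v] = inl @: [set: 'I_k].
  apply/setP => -[i|i]; rewrite !inE /=.
    by apply/esym/imsetP; exists i; rewrite ?inE.
  by apply/esym/imsetP => -[j _].
rewrite card_imset ?cardsT ?card_ord //.
by move=> a b [].
Qed.

Lemma gD_large k m (T : finType) (t : rel T) (beta : T -> GV k) :
  is_layout t beta -> 0 < m -> 3 * m <= k ->
  exists y x, t y x /\ m <= gD (@GE k) (beta @: side t y x).
Proof.
case=> tr sc binj bsurj m0 mk.
pose W := [set l in leaves t | is_inl (beta l)].
have WL : W \subset leaves t by apply/subsetP => l; rewrite inE => /andP[].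
have cW : #|W| = k.
  have inj : {in W &, injective beta}.
    by move=> a b aW bW; apply: binj; apply: (subsetP WL).
  transitivity #|[set v : GV k | is_inl v]|; last exact: card_inl.
  rewrite -(card_in_imset inj).
  apply: eq_card => v; rewrite [in RHS]inE; apply/imsetP/idP.
    by case=> l; rewrite inE => /andP[_ h] ->.
  by move=> hv; have [l lL bl] := bsurj v; exists l; rewrite // inE lL bl.
have sL : forall y x, side t y x \subset leaves t.
  by move=> y x; apply/subsetP => l; rewrite inE => /andP[].
have [y [x [yx m1 m2]]] : exists y x, [/\ t y x, m <= #|side t y x :&: W| & #|side t y x :&: W| + m <= #|W|].
  by apply: separator tr sc WL m0 _; rewrite cW.
exists y, x; split => //.
set X := beta @: side t y x.
pose A1 := [set i : 'I_k | inl i \in X].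
pose A0 := [set i : 'I_k | inl i \notin X].
have inlI : injective (@inl 'I_k ('I_k * 'I_k)%type) by move=> a b [].
have H1 : m <= #|A1|.
  apply: leq_trans m1 _.
  have inj : {in side t y x :&: W &, injective beta}.
    by move=> a b /setIP[_ aW] /setIP[_ bW]; apply: binj; apply: (subsetP WL).
  rewrite -(card_in_imset inj) -(card_imset A1 inlI); apply: subset_leq_card.
  apply/subsetP => _ /imsetP[l /setIP[ls lW] ->].
  move: lW; rewrite inE => /andP[_]; case E: (beta l) => [i|] // _.
  by apply/imsetP; exists i => //; rewrite inE -E; apply: imset_f.
have H0 : m <= #|A0|.
  have : m <= #|W :\: side t y x| by rewrite cardsD setIC; lia.
  move=> h; apply: leq_trans h _.
  have inj : {in W :\: side t y x &, injective beta}.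
    by move=> a b /setDP[aW _] /setDP[bW _]; apply: binj; apply: (subsetP WL).
  rewrite -(card_in_imset inj) -(card_imset A0 inlI); apply: subset_leq_card.
  apply/subsetP => _ /imsetP[l /setDP[lW ls] ->].
  have lL : l \in leaves t by apply: (subsetP WL).
  move: lW; rewrite inE => /andP[_]; case E: (beta l) => [i|] // _.
  apply/imsetP; exists i => //; rewrite inE -E; apply/imsetP => -[l' l's bl].
  have := binj _ _ lL (subsetP (sL y x) _ l's) bl.
  by move=> h; move: ls; rewrite h l's.
pose it (s : 'I_m) : 'I_k := enum_val (widen_ord H0 s).
pose jt (s : 'I_m) : 'I_k := enum_val (widen_ord H1 s).
have itA s : it s \in A0 by apply: enum_valP.
have jtA s : jt s \in A1 by apply: enum_valP.
have itinj : injective it.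
  by move=> a b /enum_val_inj h; apply: val_inj; have := congr1 val h.
have jtinj : injective jt.
  by move=> a b /enum_val_inj h; apply: val_inj; have := congr1 val h.
have ij s u : (it s == jt u) = false.
  apply/negbTE/eqP => h; have := itA s; have := jtA u; rewrite !inE h.
  by move=> ->.
pose pr (s : 'I_m) : GV k := inr (it s, jt s).
pose S1 := [set s | pr s \in X].
have cS : #|S1| + #|~: S1| = m by rewrite cardsC card_ord.
rewrite /gD -cS; apply: leq_add.
  case: (set_0Vmem S1) => [->|[s0 s0S]]; first by rewrite cards0.
  have hx0 : inl (it s0) \in ~: X by have := itA s0; rewrite !inE.
  have hy0 : pr s0 \in X by move: s0S; rewrite inE.
  apply: (rank_ge_id (S := S1) (f := fun s => enum_rank_in hx0 (inl (it s)))
                     (h := fun s => enum_rank_in hy0 (pr s))).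
  move=> s u sS uS; rewrite mxE !enum_rankK_in //=.
  - by rewrite ij orbF (inj_eq itinj); case: (s == u).
  - by move: uS; rewrite inE.
  by have := itA s; rewrite !inE.
case: (set_0Vmem (~: S1)) => [->|[s0 s0S]]; first by rewrite cards0.
have hx0 : inl (jt s0) \in X by have := jtA s0; rewrite !inE.
have hy0 : pr s0 \in ~: X by move: s0S; rewrite !inE.
apply: (rank_ge_id (S := ~: S1) (f := fun s => enum_rank_in hx0 (inl (jt s)))
                   (h := fun s => enum_rank_in hy0 (pr s))).
move=> s u sS uS; rewrite mxE !enum_rankK_in //=.
- by rewrite eq_sym ij (inj_eq jtinj); case: (s == u).
- by move: uS; rewrite !inE.
by have := jtA s; rewrite !inE.
Qed.

Lemma GE_diag k (i : 'I_k) : GE (inl i : GV k) (inr (i, i)).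
Proof. by rewrite /= eqxx. Qed.

Definition darc k (i : 'I_k) : Defs.arc (@GE k) :=
  exist (fun p : GV k * GV k => GE p.1 p.2) (inl i, inr (i, i)) (GE_diag i).

Lemma card_arcs k : k <= #|{: Defs.arc (@GE k)}|.
Proof.
have inj : injective (@darc k) by move=> a b /(congr1 val) [].
by have := leq_card _ inj; rewrite card_ord.
Qed.

Lemma card_GV k : k <= #|{: GV k}|.
Proof. by rewrite -{1}(card_inl k); apply: max_card. Qed.

Theorem mainTheorem15 :
  ~ exists g : nat -> nat,
      forall (V : finType) (E : rel V), irreflexive E ->
      forall a b : nat, bcrk E a -> dbw E b -> a <= g b.
Proof.
case=> g H.
pose m := (g 0).+1; pose k := 3 * m.
have k2 : 2 <= k by rewrite /k /m; lia.
have [a Ha] := width_exists (gD (@GE k)) (leq_trans k2 (card_GV k)).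
have ag := H (GV k) (@GE k) (@GE_irr k) a 0 Ha
  (dbw_zero (@GE_no2 k) (leq_trans k2 (card_arcs k))).
case: Ha => -[T [t [beta [L Wd]]]] _.
have [y [x [yx big]]] := gD_large L (isT : 0 < m) (leqnn k).
have := Wd y x yx; rewrite /m in big; lia.
Qed.
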